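(* Let $n\ge1$ and $1\le m\le n$. Suppose $A=(a_{ij})$ is an $n\times n$ $(m,\epsilon_A)$-matrix and set $K_A=\max_{i,j\le n,\,k\le m} a_{ij}/a_{kk}$. If $A'$ is an $n\times n$ $(m,\epsilon_{A'})$-matrix, then $AA'$ is an $(m,\epsilon_{AA'})$-matrix with $\epsilon_{AA'}=\epsilon_A+nK_A\epsilon_{A'}$.
   Context: For $\epsilon>0$ and $1\le m\le n$, an $n\times n$ nonnegative matrix $A=(a_{ij})$ with positive diagonal entries is an $(m,\epsilon)$-matrix if $a_{ij}/a_{jj}<\epsilon$ for all $j\le m$ and $i\neq j$. *)

(* Defs.v *)
From mathcomp Require Import all_boot all_order all_algebra.
Set Implicit Arguments. Unset Strict Implicit. Unset Printing Implicit Defensive.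
Import Order.TTheory GRing.Theory Num.Theory.
Local Open Scope ring_scope.

(* Indices are 0-based: the paper's indices 1..n are 'I_n, and "j <= m"
   (1-based) becomes "j < m" (0-based). *)

Definition meps_matrix (R : realFieldType) (n m : nat) (eps : R)
    (A : 'M[R]_n) : Prop :=
  [/\ 0 < eps,
      (forall i j : 'I_n, 0 <= A i j),
      (forall i : 'I_n, 0 < A i i) &
      (forall i j : 'I_n, (j < m)%N -> i != j -> A i j / A j j < eps)].

(* The ratios are all >= 0 for a
   nonnegative matrix with positive diagonal, and the range is nonempty
   when m >= 1, so using 0 as the neutral element of max is harmless. *)
Definition KA (R : realFieldType) (n m : nat) (A : 'M[R]_n) : R :=
  \big[Num.max/0]_(i < n) \big[Num.max/0]_(j < n)
     \big[Num.max/0]_(k < n | (k < m)%N) (A i j / A k k).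

(* Main.v *)
Require Import Defs.
From mathcomp Require Import all_boot all_order all_algebra.
Import Order.TTheory GRing.Theory Num.Theory.
Local Open Scope ring_scope.

Lemma KA_ge {R : realFieldType} {n} (m : nat) (A : 'M[R]_n) (i j k : 'I_n) :
  (k < m)%N -> A i j / A k k <= KA m A.
Proof.
move=> km; rewrite /KA.
apply: le_trans (le_bigmax _ _ i).
apply: le_trans (le_bigmax _ _ j).
exact: (le_bigmax_cond _ (fun k : 'I_n => A i j / A k k) km).
Qed.

Theorem lemma2p2 (R : realFieldType) (n m : nat) (epsA epsA' : R)
    (A A' : 'M[R]_n) :
  (1 <= n)%N -> (1 <= m)%N -> (m <= n)%N ->
  meps_matrix m epsA A -> meps_matrix m epsA' A' ->
  meps_matrix m (epsA + n%:R * KA m A * epsA') (A *m A').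
Proof.
move=> n1 m1 mn [e0 A0 Ad Ar] [e0' A0' Ad' Ar'].
have K0 : 0 <= KA m A.
  have km : (Ordinal (leq_trans m1 mn) < m)%N by [].
  set k0 : 'I_n := Ordinal (leq_trans m1 mn).
  have := KA_ge m A k0 k0 k0 km. move=> H. apply: le_trans H.
  by apply: divr_ge0; [apply: A0 | apply: ltW].
have nKe0 : 0 <= n%:R * KA m A * epsA'.
  by apply: mulr_ge0; [apply: mulr_ge0 => //; exact: ler0n | exact: ltW].
have P0 : forall i j, 0 <= (A *m A') i j.
  by move=> i j; rewrite mxE sumr_ge0 // => k _; apply: mulr_ge0.
have Dge : forall j, A j j * A' j j <= (A *m A') j j.
  move=> j; rewrite mxE (bigD1 j) //= lerDl sumr_ge0 // => k _.
  by apply: mulr_ge0.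
have Dpos : forall j, 0 < (A *m A') j j.
  by move=> j; apply: lt_le_trans (Dge j); rewrite mulr_gt0.
split => //.
- by rewrite ltr_wpDr.
- move=> i j jm ij.
  have Ajj := Ad j; have Ajj' := Ad' j.
  rewrite ltr_pdivrMr // mxE (bigD1 j) //= mulrDl.
  have h1 : A i j * A' j j < epsA * (A *m A') j j.
    have := Ar i j jm ij; rewrite ltr_pdivrMr // => h.
    apply: lt_le_trans (_ : epsA * (A j j * A' j j) <= _); last first.
      by apply: ler_wpM2l; [exact: ltW | exact: Dge].
    by rewrite mulrA ltr_pM2r.
  have h2 : \sum_(k < n | k != j) A i k * A' k j <= n%:R * KA m A * epsA' * (A *m A') j j.
    apply: le_trans (_ : \sum_(k < n | k != j) (KA m A * epsA' * (A j j * A' j j)) <= _).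
      apply: ler_sum => k kj.
      rewrite mulrACA; apply: ler_pM.
      - exact: A0.
      - exact: A0'.
      - by rewrite -ler_pdivrMr //; apply: KA_ge.
      - by have := Ar' k j jm kj; rewrite ltr_pdivrMr // => /ltW.
    apply: le_trans (_ : \sum_(k < n) (KA m A * epsA' * (A j j * A' j j)) <= _).
      rewrite [X in _ <= X](bigD1 j) //= lerDr; apply: mulr_ge0.
        by apply: mulr_ge0 => //; exact: ltW.
      by apply: mulr_ge0; exact: ltW.
    rewrite sumr_const card_ord -[_ *+ n]mulr_natl (mulrA n%:R) (mulrA n%:R); apply: ler_wpM2l.
      by rewrite -mulrA; apply: mulr_ge0 => //; apply: mulr_ge0 => //; exact: ltW.
    exact: Dge.
  exact: ltr_leD h1 h2.
Qed.
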